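(* Let $q$ be a prime power, let $\mathbb{F}=\mathrm{GF}(q^2)$, and let $H\subseteq \mathbb{F}^\ast$ be the subgroup of order $q+1$. Let $G=G(q^2,q+1)$ be the simple graph whose vertex set is $(\mathbb{F}\times\mathbb{F}\setminus\{(0,0)\})/\sim$, where $(a_1,b_1)\sim(a_2,b_2)$ iff there is $h\in H$ with $a_1=ha_2$ and $b_1=hb_2$, and in which two distinct vertices $\langle a,b\rangle$ and $\langle x,y\rangle$ are adjacent iff $ax+by\in H$. If $q$ is odd then $|E(G)|=\frac{1}{2}(q^5-q^4+q^3-2q^2+1)$. If $q=2^k$ then $|E(G)|=\frac{1}{2}(q^5-q^4+q^3-2q^2)$.
   Context: $\langle a,b\rangle$ denotes the equivalence class of the pair $(a,b)$; adjacency does not depend on the representatives. Loops are not edges: a vertex $\langle x,y\rangle$ with $x^2+y^2\in H$ is not adjacent to itself. *)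

(* Defs.v *)
From mathcomp Require Import all_boot all_order all_algebra all_field.
Set Implicit Arguments. Unset Strict Implicit. Unset Printing Implicit Defensive.
Import GRing.Theory.
Local Open Scope ring_scope.

Section Graph.
Variables (F : finFieldType) (H : {set F}).

Definition hclass (u : F * F) : {set F * F} :=
  [set (h * u.1, h * u.2) | h in H].

Definition gvertices : {set {set F * F}} :=
  [set hclass u | u in [set u : F * F | u != (0, 0)]].

Definition gadj (X Y : {set F * F}) : bool :=
  [&& X \in gvertices, Y \in gvertices, X != Y &
      [exists u in X, exists v in Y, u.1 * v.1 + u.2 * v.2 \in H]].

Definition gedges : {set {set {set F * F}}} :=
  [set E | [exists X, exists Y, gadj X Y && (E == [set X; Y])]].

End Graph.

(* Main.v *)
Require Import Defs.
From mathcomp Require Import all_boot all_order all_algebra all_field.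
From mathcomp Require Import cyclic ring lra zify.
Import GRing.Theory.
Set Implicit Arguments. Unset Strict Implicit.
Local Open Scope ring_scope.
Lemma card_fib (T U : finType) (A : {set T}) (B : {set U}) (f : T -> U) :
  (forall x, x \in A -> f x \in B) ->
  #|A| = (\sum_(y in B) #|[set x in A | f x == y]|)%N.
Proof.
move=> fAB; rewrite -sum1_card (partition_big f (mem B)) //=.
apply: eq_bigr => y _; rewrite -sum1_card; apply: eq_bigl => x.
by rewrite inE.
Qed.

Lemma card_fibc (T U : finType) (A : {set T}) (B : {set U}) (f : T -> U) c :
  (forall x, x \in A -> f x \in B) ->
  (forall y, y \in B -> #|[set x in A | f x == y]| = c) ->
  #|A| = (#|B| * c)%N.
Proof.
move=> fAB fc; rewrite (card_fib fAB) -sum_nat_const; exact: eq_bigr.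
Qed.

Lemma gadj_sym (F : finFieldType) (H : {set F}) X Y : gadj H X Y -> gadj H Y X.
Proof.
case/and4P => XV YV XY /exists_inP [u uX /exists_inP [v vY e]].
rewrite /gadj YV XV eq_sym XY /=; apply/exists_inP; exists v => //.
by apply/exists_inP; exists u => //; rewrite mulrC [v.2 * _]mulrC.
Qed.

Lemma set2_inj (T : finType) (a b x y : T) : a != b -> [set a; b] = [set x; y] ->
  (a = x /\ b = y) \/ (a = y /\ b = x).
Proof.
move=> ab e.
have ha : a \in [set x; y] by rewrite -e !inE eqxx.
have hb : b \in [set x; y] by rewrite -e !inE eqxx orbT.
rewrite !inE in ha hb.
case/orP: ha => /eqP ea; subst a.
  by left; split=> //; case/orP: hb => /eqP eb //; subst b; rewrite eqxx in ab.
by right; split=> //; case/orP: hb => /eqP eb //; subst b; rewrite eqxx in ab.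
Qed.

Lemma edges_count (F : finFieldType) (H : {set F}) :
  #|[set p : {set F * F} * {set F * F} | gadj H p.1 p.2]| = (#|gedges H| * 2)%N.
Proof.
apply: (card_fibc (f := fun p => [set p.1; p.2])).
  move=> p; rewrite inE => adj; rewrite inE; apply/existsP; exists p.1.
  by apply/existsP; exists p.2; rewrite adj eqxx.
move=> E; rewrite inE => /existsP [X /existsP [Y /andP [adj /eqP ->]]].
have XY : X != Y by case/and4P: adj.
have -> : 2%N = ((X, Y) != (Y, X)).+1.
  by case: eqP => // -[e _]; rewrite e eqxx in XY.
rewrite -cards2; apply: eq_card => p; rewrite !inE.
apply/andP/orP.
  case=> adjp /eqP e; have pp : p.1 != p.2 by case/and4P: adjp.
  case: (set2_inj pp e) => [[e1 e2]|[e1 e2]].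
    by left; case: p e1 e2 {adjp e pp} => a b /= -> ->.
  by right; case: p e1 e2 {adjp e pp} => a b /= -> ->.
case=> /eqP -> /=; first by rewrite adj.
by rewrite gadj_sym // setUC.
Qed.
Definition dot (F : finFieldType) (u v : F * F) := u.1 * v.1 + u.2 * v.2.

Lemma dotC (F : finFieldType) (u v : F * F) : dot u v = dot v u.
Proof. by rewrite /dot mulrC [u.2 * _]mulrC. Qed.

Lemma dotMl (F : finFieldType) (h : F) (u v : F * F) :
  dot (h * u.1, h * u.2) v = h * dot u v.
Proof. by rewrite /dot /= mulrDr !mulrA. Qed.

Lemma hclassP (F : finFieldType) (H : {set F}) u v :
  reflect (exists2 h, h \in H & v = (h * u.1, h * u.2)) (v \in hclass H u).
Proof. exact: imsetP. Qed.

Lemma hclass_self (F : finFieldType) (H : {set F}) u : 1 \in H -> u \in hclass H u.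
Proof. by move=> H1; apply/hclassP; exists 1 => //; rewrite !mul1r; case: u. Qed.

Lemma hclass_eq (F : finFieldType) (H : {set F}) u v :
  0 \notin H -> (forall x y, x \in H -> y \in H -> x * y \in H) ->
  (forall x, x \in H -> x^-1 \in H) ->
  v \in hclass H u -> hclass H v = hclass H u.
Proof.
move=> H0 HM HV /hclassP [h hH ->]; apply/setP => w; apply/hclassP/hclassP.
  by case=> g gH ->; exists (g * h); rewrite ?HM //= !mulrA.
case=> g gH ->; exists (g * h^-1); rewrite ?HM ?HV //= !mulrA mulfVK //.
by apply: contraNneq H0 => <-.
Qed.

Lemma card_hclass (F : finFieldType) (H : {set F}) u :
  u != 0 -> #|hclass H u| = #|H|.
Proof.
move=> u0; apply: card_imset => h g [e1 e2].
case: (eqVneq u.1 0) => [a0|a0]; last exact: (mulIf a0).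
have b0 : u.2 != 0 by apply: contraNneq u0 => b0; case: u a0 b0 {e1 e2} => /= a b -> ->.
exact: (mulIf b0).
Qed.

Lemma hclass_nz (F : finFieldType) (H : {set F}) u v :
  0 \notin H -> u != 0 -> v \in hclass H u -> v != 0.
Proof.
move=> H0 u0 /hclassP [h hH ->]; apply: contraNneq u0 => [[e1 e2]].
have h0 : h != 0 by apply: contraNneq H0 => <-.
by case: u e1 e2 => a b /= /eqP; rewrite mulf_eq0 (negPf h0) /= => /eqP -> /eqP;
  rewrite mulf_eq0 (negPf h0) /= => /eqP ->.
Qed.

Lemma gverticesP (F : finFieldType) (H : {set F}) X :
  reflect (exists2 u, u != 0 & X = hclass H u) (X \in gvertices H).
Proof.
apply: (iffP imsetP) => [[u]|[u]]; rewrite ?inE => u0 ->; by exists u; rewrite ?inE.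
Qed.

Lemma dot_in (F : finFieldType) (H : {set F}) u v u' v' :
  0 \notin H -> (forall x y, x \in H -> y \in H -> x * y \in H) ->
  (forall x, x \in H -> x^-1 \in H) ->
  u' \in hclass H u -> v' \in hclass H v -> dot u v \in H -> dot u' v' \in H.
Proof.
move=> H0 HM HV /hclassP [h1 h1H ->] /hclassP [h2 h2H ->] d.
by rewrite dotMl dotC dotMl dotC HM // HM.
Qed.

Lemma pairs_count (F : finFieldType) (H : {set F}) :
  0 \notin H -> 1 \in H -> (forall x y, x \in H -> y \in H -> x * y \in H) ->
  (forall x, x \in H -> x^-1 \in H) ->
  #|[set w : (F * F) * (F * F) |
      [&& w.1 != 0, dot w.1 w.2 \in H & hclass H w.1 != hclass H w.2]]| =
  (#|[set p : {set F * F} * {set F * F} | gadj H p.1 p.2]| * (#|H| * #|H|))%N.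
Proof.
move=> H0 H1 HM HV.
apply: (card_fibc (f := fun w => (hclass H w.1, hclass H w.2))).
  move=> [u v]; rewrite !inE /= => /and3P [u0 d ne].
  have v0 : v != 0.
    by apply: contraNneq H0 => v0; move: d; rewrite v0 /dot /= !mulr0 addr0.
  rewrite /gadj ne; apply/and4P; split => //.
  - by apply/gverticesP; exists u.
  - by apply/gverticesP; exists v.
  apply/exists_inP; exists u; first exact: hclass_self.
  by apply/exists_inP; exists v; first exact: hclass_self.
move=> [X Y]; rewrite inE /= => adj.
case/and4P: (adj) => /gverticesP [u0 u00 eX] /gverticesP [v0 v00 eY] XY
   /exists_inP [u uX /exists_inP [v vY d]].
have cX : #|X| = #|H| by rewrite eX card_hclass.
have cY : #|Y| = #|H| by rewrite eY card_hclass.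
rewrite -{1}cX -cY -cardsX.
apply: eq_card => -[a b]; rewrite !inE /=.
apply/idP/idP.
  case/andP => /and3P [a0 dab ne] /eqP [<- <-].
  by rewrite !hclass_self.
case/andP => aX bY.
have ea : hclass H a = X by rewrite eX; apply: hclass_eq => //; rewrite -eX.
have eb : hclass H b = Y by rewrite eY; apply: hclass_eq => //; rewrite -eY.
rewrite ea eb XY eqxx andbT /=.
rewrite (hclass_nz H0 u00) ?andTb; last by rewrite -eX.
have hu : hclass H u = X by rewrite eX; apply: hclass_eq => //; rewrite -eX.
have hv : hclass H v = Y by rewrite eY; apply: hclass_eq => //; rewrite -eY.
rewrite andbT; apply: (dot_in H0 HM HV _ _ d); by rewrite ?hu ?hv.
Qed.

Lemma line_count (F : finFieldType) (u : F * F) (h : F) :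
  u != 0 -> #|[set v : F * F | dot u v == h]| = #|F|.
Proof.
case: u => a b u0; case: (eqVneq a 0) => [a0|a0].
  subst a; have b0 : b != 0 by apply: contraNneq u0 => ->.
  rewrite -cardsT -(card_imset [set: F] (f := fun t => (t, (h - 0 * t) / b))); last first.
    by move=> x y [].
  apply: eq_card => -[x y]; rewrite !inE /dot /=.
  apply/eqP/imsetP.
    move=> e; exists x; rewrite ?inE //; congr (_, _).
    by rewrite -e !mul0r subr0 add0r [b * _]mulrC mulfK.
  by case=> t _ [-> ->]; rewrite !mul0r add0r subr0 mulrC divfK.
rewrite -cardsT -(card_imset [set: F] (f := fun t => ((h - b * t) / a, t))); last first.
  by move=> x y [].
apply: eq_card => -[x y]; rewrite !inE /dot /=.
apply/eqP/imsetP.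
  move=> e; exists y; rewrite ?inE //; congr (_, _).
  by rewrite -e addrK [a * _]mulrC mulfK.
by case=> t _ [-> ->]; rewrite mulrC divfK // subrK.
Qed.

Lemma all_count (F : finFieldType) (H : {set F}) :
  #|[set w : (F * F) * (F * F) | (w.1 != 0) && (dot w.1 w.2 \in H)]| =
  ((#|F| * #|F|).-1 * (#|H| * #|F|))%N.
Proof.
have -> : (#|F| * #|F|).-1 = #|[set u : F * F | u != 0]|.
  by rewrite -card_prod -(cardsC1 (0 : F * F)); apply: eq_card => u; rewrite !inE.
apply: (card_fibc (f := fun w => w.1)).
  by move=> w; rewrite !inE => /andP [].
move=> u; rewrite inE => u0.
have -> : [set x in [set w : (F * F) * (F * F) | (w.1 != 0) && (dot w.1 w.2 \in H)] | x.1 == u]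
   = (fun v => (u, v)) @: [set v | dot u v \in H].
  apply/setP => -[x v]; rewrite !inE /=; apply/idP/imsetP.
    by case/andP => /andP [_ d] /eqP e; subst x; exists v; rewrite ?inE.
  by case=> t; rewrite inE => d [-> ->]; rewrite u0 d eqxx.
rewrite card_imset; last by move=> x y [].
apply: (card_fibc (f := fun v => dot u v)); first by move=> v; rewrite inE.
move=> h hH; rewrite -(line_count h u0); apply: eq_card => v; rewrite !inE.
by apply/andP/idP => [[_ ->] //|/eqP e]; rewrite e hH.
Qed.

Lemma diag_count (F : finFieldType) (H : {set F}) :
  0 \notin H -> 1 \in H -> (forall x y, x \in H -> y \in H -> x * y \in H) ->
  (forall x, x \in H -> x^-1 \in H) ->
  #|[set w : (F * F) * (F * F) |
      [&& w.1 != 0, dot w.1 w.2 \in H & hclass H w.1 == hclass H w.2]]| =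
  (#|[set u : F * F | dot u u \in H]| * #|H|)%N.
Proof.
move=> H0 H1 HM HV.
apply: (card_fibc (f := fun w => w.1)).
  move=> [x v]; rewrite !inE /= => /and3P [x0 d /eqP e].
  apply: (dot_in H0 HM HV _ _ d); first exact: hclass_self.
  by rewrite -e hclass_self.
move=> u; rewrite inE => d.
have u0 : u != 0 by apply: contraNneq H0 => u0; move: d; rewrite u0 /dot /= !mulr0 addr0.
rewrite -(card_hclass H u0) -(card_imset (hclass H u) (f := pair u)); last by move=> x y [].
apply: eq_card => -[x v]; rewrite !inE /=; apply/idP/imsetP.
  case/andP => /and3P [_ _ /eqP e] /eqP ex; subst x; exists v => //.
  by rewrite e hclass_self.
case=> v' vH [-> ->]; rewrite eqxx u0 (hclass_eq H0 HM HV vH) eqxx /= andbT.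
rewrite andbT; apply: (dot_in H0 HM HV _ _ d) => //; exact: hclass_self.
Qed.

Lemma split_count (F : finFieldType) (H : {set F}) :
  #|[set w : (F * F) * (F * F) | (w.1 != 0) && (dot w.1 w.2 \in H)]| =
  (#|[set w : (F * F) * (F * F) |
      [&& w.1 != 0%R, dot w.1 w.2 \in H & hclass H w.1 != hclass H w.2]]| +
   #|[set w : (F * F) * (F * F) |
      [&& w.1 != 0%R, dot w.1 w.2 \in H & hclass H w.1 == hclass H w.2]]|)%N.
Proof.
rewrite -(cardsID [set w : (F * F) * (F * F) | hclass H w.1 == hclass H w.2]) addnC.
congr (_ + _)%N; apply: eq_card => w; rewrite !inE.
  by case: (w.1 != 0); case: (dot w.1 w.2 \in H); case: (hclass H w.1 == hclass H w.2).
by rewrite andbA.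
Qed.

Lemma sqrt_m1 (F : finFieldType) : (4 %| #|F|.-1)%N -> exists i : F, i ^+ 2 = -1.
Proof.
move=> d4; set n := #|F|.-1.
have nS : #|F| = n.+1 by rewrite /n prednK // (ltn_trans _ (finNzRing_gt1 F)).
have n0 : (0 < n)%N by rewrite /n -ltnS -nS finNzRing_gt1.
have : has n.-primitive_root (enum [set~ (0 : F)]).
  apply: has_prim_root => //.
  - apply/allP => x; rewrite mem_enum !inE => x0; rewrite unity_rootE.
    have := expf_card x; rewrite nS exprSr => e.
    by apply/eqP; apply: (mulIf x0); rewrite mul1r.
  - exact: enum_uniq.
  - by rewrite -fintype.cardE cardsC1.
case/hasP => z _ pz.
case/dvdnP: d4 => m em.
have {}em : n = (m * 4)%N by exact: em.
have m0 : (0 < m)%N by move: n0; rewrite em; case: (m).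
exists (z ^+ m).
have : (z ^+ m) ^+ 2 ^+ 2 == 1.
  rewrite -!exprM -(prim_order_dvd pz) em.
  exact: dvdnn.
rewrite sqrf_eq1 => /orP [|/eqP //].
rewrite -exprM -(prim_order_dvd pz) em => /dvdn_leq.
by rewrite muln_gt0 m0 /= leq_pmul2l // => /(_ isT).
Qed.

Lemma conic_odd (F : finFieldType) (i c : F) :
  i ^+ 2 = -1 -> (2%:R : F) != 0 -> c != 0 ->
  #|[set u : F * F | dot u u == c]| = #|F|.-1.
Proof.
move=> ii two c0.
pose phi := fun u : F * F => (u.1 + i * u.2, u.1 - i * u.2).
have i0 : i != 0.
  apply/eqP => i0; move: ii; rewrite i0 expr0n /= => /eqP.
  by rewrite eq_sym oppr_eq0 oner_eq0.
have phi_inj : injective phi.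
  move=> [a b] [a' b'] [e1 e2] /=.
  have ea : a * 2%:R = a' * 2%:R.
    have -> : a * 2%:R = (a + i * b) + (a - i * b) by ring.
       rewrite e1 e2; ring.
  have eb : b * (2%:R * i) = b' * (2%:R * i).
    have -> : b * (2%:R * i) = (a + i * b) - (a - i * b) by ring.
       rewrite e1 e2; ring.
  by rewrite (mulIf two ea) (mulIf _ eb) // mulf_neq0.
have -> : [set u : F * F | dot u u == c] = phi @^-1: [set w : F * F | w.1 * w.2 == c].
  apply/setP => -[a b]; rewrite !inE /phi /dot /=.
  have -> : (a + i * b) * (a - i * b) = a * a - i ^+ 2 * (b * b) by ring.
  by rewrite ii mulN1r opprK.
rewrite card_preimset //.
rewrite -(cardsC1 (0 : F)) -[#|[set~ _]|]muln1.
apply: (card_fibc (f := fun w : F * F => w.1)).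
  move=> [a b]; rewrite !inE /= => /eqP e; apply: contraNneq c0 => a0.
  by rewrite -e a0 mul0r.
move=> s; rewrite !inE => s0; rewrite -(cards1 (s, c / s)); apply: eq_card => -[a b].
rewrite !inE /= xpair_eqE; apply/andP/andP.
  case=> /eqP e /eqP ea; subst a; split => //; apply/eqP.
  by rewrite -e [s * _]mulrC mulfK.
by case=> /eqP -> /eqP ->; split => //; rewrite mulrC divfK.
Qed.

Lemma conic_even (F : finFieldType) (c : F) :
  (2%:R : F) = 0 -> #|[set u : F * F | dot u u == c]| = #|F|.
Proof.
move=> two.
have dbl x : x + x = 0 :> F by rewrite -mulr2n -mulr_natr two mulr0.
have sqD x y : (x + y) ^+ 2 = x ^+ 2 + y ^+ 2 :> F.
  by rewrite sqrrD -mulr_natr two mulr0 addr0.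
have sq_inj : injective (fun x : F => x ^+ 2).
  move=> x y /= e; apply/eqP; rewrite -subr_eq0.
  have : (x + y) ^+ 2 == 0 by rewrite sqD e dbl.
  rewrite sqrf_eq0 => /eqP e2; apply/eqP; rewrite -[RHS]e2; congr (_ + _).
  by rewrite -[LHS]add0r -(dbl y) addrK.
have /codomP [s es] := injF_onto sq_inj c.
rewrite -(line_count s (u := (1, 1))); last by apply/negP => /eqP /(congr1 fst) /= /eqP; rewrite oner_eq0.
apply: eq_card => -[a b]; rewrite !inE /dot /= !mul1r es -!expr2 -sqD.
by rewrite (inj_eq sq_inj).
Qed.

Lemma S_count (F : finFieldType) (H : {set F}) n :
  (forall c, c \in H -> #|[set u : F * F | dot u u == c]| = n) ->
  #|[set u : F * F | dot u u \in H]| = (#|H| * n)%N.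
Proof.
move=> hn; apply: (card_fibc (f := fun u => dot u u)); first by move=> u; rewrite inE.
move=> c cH; rewrite -(hn c cH); apply: eq_card => u; rewrite !inE.
by apply/andP/idP => [[_ ->] //|/eqP e]; rewrite e cH.
Qed.

Theorem theorem4 (q : nat) (F : finFieldType) (H : {set F})
  (hq : exists p k : nat, [/\ prime p, (0 < k)%N & q = (p ^ k)%N])
  (hF : #|F| = (q ^ 2)%N)
  (H0 : 0 \notin H) (H1 : 1 \in H)
  (HM : forall x y, x \in H -> y \in H -> x * y \in H)
  (HV : forall x, x \in H -> x^-1 \in H)
  (Hcard : #|H| = q.+1) :
  (odd q ->
     2 * (#|gedges H| : int) =
       (q : int) ^+ 5 - (q : int) ^+ 4 + (q : int) ^+ 3 - 2 * (q : int) ^+ 2 + 1)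
  /\ ((exists k : nat, q = (2 ^ k)%N) ->
     2 * (#|gedges H| : int) =
       (q : int) ^+ 5 - (q : int) ^+ 4 + (q : int) ^+ 3 - 2 * (q : int) ^+ 2).
Proof.
case: hq => p [k [pp k0 eq]].
have hFp : #|F| = (p ^ (k * 2))%N by rewrite hF eq -expnM.
have pchF : p \in [pchar F] := card_finPcharP hFp pp.
have E3 := all_count H.
rewrite split_count pairs_count // edges_count diag_count // in E3.
have hF' : #|F| = (q * q)%N by rewrite hF.
have q0 : (0 < q)%N by rewrite eq expn_gt0 prime_gt0.
have key : forall Nc : nat,
    #|[set u : F * F | dot u u \in H]| = (#|H| * Nc)%N ->
    ((q%:Z + 1) ^+ 2 * (2 * (#|gedges H| : int)) =
      ((q%:Z) ^+ 4 - 1) * (q%:Z + 1) * q%:Z ^+ 2 - (q%:Z + 1) ^+ 2 * Nc%:Z).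
  move=> Nc hS; rewrite hS Hcard hF' in E3.
  have := congr1 Posz E3; rewrite !PoszD !PoszM predn_int ?muln_gt0 ?q0 // !PoszM.
  have qS : Posz q.+1 = q%:Z + 1 by rewrite -addn1 PoszD.
  rewrite qS => hz.
  apply: (addIr ((q%:Z + 1) ^+ 2 * Nc%:Z)); rewrite subrK.
  lra.
split.
  move=> oq.
  have two : (2%:R : F) != 0.
    apply/eqP => two; have := pcharf0 pchF.
    have op : odd p by move: oq; rewrite eq oddX (negPf (lt0n_neq0 k0)).
    rewrite -[p]odd_double_half op -muln2 natrD natrM two mulr0 addr0 => /eqP.
    by rewrite oner_eq0.
  have [i ii] : exists i : F, i ^+ 2 = -1.
    apply: sqrt_m1; rewrite hF'.
    have e2 := odd_double_half q; rewrite oq in e2.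
    rewrite -e2; set r := q./2; apply/dvdnP; exists (r * r.+1)%N.
    rewrite -muln2.
    have -> : ((1 + r * 2) * (1 + r * 2) = (r * r.+1 * 4).+1)%N.
      rewrite -addn1 -[r.+1]addn1; ring.
    by [].
  have hS : #|[set u : F * F | dot u u \in H]| = (#|H| * #|F|.-1)%N.
    apply: S_count => c cH; apply: conic_odd ii two _.
    by apply: contraNneq H0 => <-.
  have := key _ hS.
  rewrite hF' predn_int ?muln_gt0 ?q0 // PoszM => hk.
  have hq1 : (q%:Z + 1) ^+ 2 != 0.
    by rewrite expf_neq0 // -[1]/(Posz 1) -PoszD eqz_nat addn1.
  apply: (mulfI hq1); rewrite hk; ring.
case=> k' ek.
have h2 : (2 : nat) \in [pchar F].
  by apply: (card_finPcharP (n := (k' * 2)%N)) => //; rewrite hF ek -expnM.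
have two : (2%:R : F) = 0 := pcharf0 h2.
have hS : #|[set u : F * F | dot u u \in H]| = (#|H| * #|F|)%N.
  by apply: S_count => c cH; apply: conic_even.
have := key _ hS.
rewrite hF' PoszM => hk.
have hq1 : (q%:Z + 1) ^+ 2 != 0.
  by rewrite expf_neq0 // -[1]/(Posz 1) -PoszD eqz_nat addn1.
apply: (mulfI hq1); rewrite hk; ring.
Qed.
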